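(* Let $\kappa_{\mathrm{even}}$ denote the growth rate of the even model and $\kappa_{p\text{-}i}$ the growth rate of the $p$-$i$ model on the square lattice, as defined in the context. Then $\kappa_{\mathrm{even}}=\kappa_{p\text{-}i}$.
   Context: Work on the finite square lattice $[1,N]^2\subset\mathbb{Z}^2$, whose $N^2$ vertices carry spins $\oplus$ or $\ominus$. A spin configuration satisfies the even constraint if for any two $\ominus$ spins lying on a common horizontal or vertical line with no other $\ominus$ spin between them, the number of $\oplus$ spins between them is even. Let $Z^{\mathrm{even}}_N$ be the number of such configurations on $[1,N]^2$. The $p$-$i$ model places states on the bonds of $[1,N]^2$, including boundary bonds (so every vertex has four incident bonds), each state being $p$ or $i$. A labelling is valid if at every vertex: the number of incident bonds labelled $i$ is $0$ or $2$, and the two horizontal incident bonds are not both $i$, and the two vertical incident bonds are not both $i$ (i.e. no two adjacent $i$ states along any horizontal or vertical line). Let $Z^{p\text{-}i}_N$ be the number of valid labellings. (Intuitively, a bond's state records the parity, $p$ = even, $i$ = odd, of the number of $\oplus$ spins between it and the nearest $\ominus$ to its west/north.) The growth rate of a model is $\kappa=\lim_{N\to\infty} Z_N^{1/N^2}$ (these limits are taken to exist). *)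

(* Defs.v *)
From Stdlib Require Import Reals.
From Coquelicot Require Import Coquelicot.
From mathcomp Require Import all_boot.

Set Implicit Arguments.
Unset Strict Implicit.
Unset Printing Implicit Defensive.

(* Vertices of [1,N]^2 are indexed by 'I_N * 'I_N (row, column).
   A spin configuration maps a vertex to [true] for (+) and [false] for (-). *)
Definition spin_config (N : nat) := {ffun 'I_N * 'I_N -> bool}.

Definition even_constraint (N : nat) (s : spin_config N) : bool :=
  [forall i : 'I_N, forall j1 : 'I_N, forall j2 : 'I_N,
     ((j1 < j2)%N && ~~ s (i, j1) && ~~ s (i, j2)
      && [forall k : 'I_N, ((j1 < k)%N && (k < j2)%N) ==> s (i, k)])
     ==> ~~ odd #|[set k : 'I_N | (j1 < k)%N && (k < j2)%N && s (i, k)]|]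
  &&
  [forall j : 'I_N, forall i1 : 'I_N, forall i2 : 'I_N,
     ((i1 < i2)%N && ~~ s (i1, j) && ~~ s (i2, j)
      && [forall k : 'I_N, ((i1 < k)%N && (k < i2)%N) ==> s (k, j)])
     ==> ~~ odd #|[set k : 'I_N | (i1 < k)%N && (k < i2)%N && s (k, j)]|].

Definition Z_even (N : nat) : nat :=
  #|[set s : spin_config N | even_constraint s]|.

(* Horizontal bonds: row i in 'I_N, position p in 'I_N.+1; the vertex (i,j)
   has west bond (i, j) and east bond (i, j+1).  Boundary bonds are
   positions 0 and N.
   Vertical bonds: position p in 'I_N.+1, column j in 'I_N; the vertex (i,j)
   has north bond (i, j) and south bond (i+1, j).
   A bond state is [true] for i (odd) and [false] for p (even). *)
Definition pi_labelling (N : nat) :=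
  ({ffun 'I_N * 'I_N.+1 -> bool} * {ffun 'I_N.+1 * 'I_N -> bool})%type.

Definition pi_vertex_ok (w e n s : bool) : bool :=
  [&& ((w + e + n + s)%N == 0%N) || ((w + e + n + s)%N == 2%N),
      ~~ (w && e) & ~~ (n && s)].

Definition pi_valid (N : nat) (L : pi_labelling N) : bool :=
  [forall i : 'I_N, forall j : 'I_N,
     pi_vertex_ok (L.1 (i, widen_ord (leqnSn N) j)) (L.1 (i, lift ord0 j))
                  (L.2 (widen_ord (leqnSn N) i, j)) (L.2 (lift ord0 i, j))].

Definition Z_pi (N : nat) : nat :=
  #|[set L : pi_labelling N | pi_valid L]|.

Definition growth_seq (Z : nat -> nat) (N : nat) : R :=
  Rpower (INR (Z N)) (/ INR (N * N)).

(* Main.v *)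
Require Import Defs.
From Stdlib Require Import Reals Lra.
From Coquelicot Require Import Coquelicot.
From mathcomp Require Import all_boot.
Set Implicit Arguments. Unset Strict Implicit.
Local Open Scope nat_scope.

Definition E1 (x : nat -> bool) N := forall j1 j2, j1 < j2 -> j2 < N ->
  ~~ x j1 -> ~~ x j2 -> (forall k, j1 < k -> k < j2 -> x k) -> ~~ odd (j2 - j1.+1).
Definition V1 (x b : nat -> bool) N := forall j, j < N ->
  if x j then b j != b j.+1 else ~~ b j && ~~ b j.+1.

Lemma V1_step x b N j : V1 x b N -> j < N -> b j.+1 = x j && ~~ b j.
Proof.
move=> /(_ j) H /H; case: (x j) => /=; case: (b j); case: (b j.+1) => //.
Qed.

Lemma V1_flip x b N : V1 x b N -> forall a t, a + t <= N ->
  (forall k, a <= k -> k < a + t -> x k) -> b (a + t) = odd t (+) b a.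
Proof.
move=> HV a; elim=> [|t IH] Ht Hx; first by rewrite addn0.
have Ht' : a + t < N by rewrite -addnS.
rewrite addnS (V1_step HV Ht') IH.
- rewrite Hx ?leq_addr ?addnS //=.
  by case: (odd t); case: (b a).
- exact: ltnW.
- by move=> k H1 H2; apply: Hx => //; rewrite addnS ltnS ltnW.
Qed.

Lemma V1_E1 x b N : V1 x b N -> E1 x N.
Proof.
move=> HV j1 j2 H12 H2 Hm1 Hm2 Hb.
have B1 : b j1.+1 = false.
  by have := HV j1 (ltn_trans H12 H2); rewrite (negbTE Hm1) => /andP[_ /negbTE].
have B2 : b j2 = false.
  by have := HV j2 H2; rewrite (negbTE Hm2) => /andP[/negbTE].
have := V1_flip HV (a := j1.+1) (t := j2 - j1.+1).
rewrite subnKC // B1 B2 addbF => H; rewrite -H //; try exact: ltnW.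
Qed.

Lemma V1_uniq x b1 b2 N : V1 x b1 N -> V1 x b2 N -> b1 0 = b2 0 ->
  forall j, j <= N -> b1 j = b2 j.
Proof.
move=> H1 H2 H0; elim=> [|j IH] // Hj.
by rewrite (V1_step H1 Hj) (V1_step H2 Hj) IH // ltnW.
Qed.

Fixpoint bfun (x : nat -> bool) (c : bool) (k : nat) : bool :=
  if k is k'.+1 then x k' && ~~ bfun x c k' else c.

Lemma E1_V1 x N c : E1 x N ->
  (forall m, m < N -> ~~ x m -> (forall k, k < m -> x k) -> c = odd m) ->
  V1 x (bfun x c) N.
Proof.
move=> HE Hc.
have J : forall j, j <= N -> forall m, j <= m -> m < N -> ~~ x m ->
    (forall k, j <= k -> k < m -> x k) -> bfun x c j = odd (m - j).
  elim=> [|j IH] Hj m Hjm HmN Hm Hx.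
    by rewrite subn0 /=; apply: Hc => // k Hk; apply: Hx.
  rewrite /=; case Exj: (x j) => /=.
  - rewrite (IH (ltnW Hj) m (ltnW Hjm) HmN Hm).
      by rewrite -subnSK // /=; case: (odd _).
    move=> k Hk1 Hk2; case: (ltngtP j k) => [Hlt|Hgt|<-] //.
    + by apply: Hx.
    + by rewrite ltnNge Hk1 in Hgt.
  - case: (ltngtP j.+1 m) Hjm => [Hlt|//|Heq] _.
      apply/esym/negbTE; apply: HE => //; first exact: ltnW.
      by rewrite Exj.
    by rewrite -Heq subnn.
move=> j Hj /=; case Exj: (x j) => //=.
- by case: (bfun x c j).
- rewrite andbT (J j (ltnW Hj) j (leqnn j) Hj) ?subnn //.
  + by rewrite Exj.
  + by move=> k H1 H2; rewrite leqNgt H2 in H1.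
Qed.

Definition cfun (x : nat -> bool) N : bool :=
  [exists m : 'I_N, [&& ~~ x m, [forall k : 'I_N, (k < m) ==> x k] & odd m]].

Lemma cfun_spec x N m : m < N -> ~~ x m -> (forall k, k < m -> x k) ->
  cfun x N = odd m.
Proof.
move=> HmN Hm Hx; case Eo: (odd m).
  apply/existsP; exists (Ordinal HmN) => /=; rewrite Hm Eo andbT.
  by apply/forallP => k; apply/implyP; apply: Hx.
apply/negbTE/existsP => [[m' /and3P[Hm' /forallP Hf Ho]]].
case: (ltngtP m' m) => [Hlt|Hgt|Heq].
- by rewrite Hx in Hm'.
- by have := Hf (Ordinal HmN); rewrite /= Hgt /= (negbTE Hm).
- by rewrite Heq Eo in Ho.
Qed.

Lemma E1_V1c x N : E1 x N -> V1 x (bfun x (cfun x N)) N.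
Proof. move=> HE; apply: E1_V1 => // m *; exact: cfun_spec. Qed.

Lemma card_between N (P : 'I_N -> bool) (a b : nat) : b <= N ->
  (forall k : 'I_N, a < k -> k < b -> P k) ->
  #|[set k : 'I_N | (a < k) && (k < b) && P k]| = b - a.+1.
Proof.
move=> HbN HP.
have -> : [set k : 'I_N | (a < k) && (k < b) && P k] = [set k : 'I_N | (a < k) && (k < b)].
  apply/setP => k; rewrite !inE; case H1: (a < k); case H2: (k < b) => //=.
  by rewrite HP.
rewrite -sum1_card big_mkcond /=; under eq_bigr do rewrite inE.
rewrite -(big_mkord xpredT (fun k => if (a < k) && (k < b) then 1 else 0)).
case: (leqP b a.+1) => Hab.
  rewrite big1_seq; first by apply/esym/eqP; rewrite subn_eq0.
  move=> k _; case: (ltnP a k) => //= Hk.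
  by rewrite ltnNge (leq_trans Hab Hk).
have H1 : a.+1 <= N by apply: leq_trans HbN; apply: ltnW.
rewrite (@big_cat_nat _ _ _ a.+1 0 N _ _ (leq0n _) H1).
rewrite (@big_cat_nat _ _ _ b a.+1 N _ _ (ltnW Hab) HbN).
rewrite big_nat_cond big1; last first.
  by move=> k /andP[/andP[_ Hk] _]; rewrite ltnS leqNgt in Hk; rewrite (negbTE Hk).
rewrite /= add0n [X in _ + X]big_nat_cond [X in _ + X]big1 ?addn0; last first.
  by move=> k /andP[/andP[Hk _] _]; rewrite (leq_gtF Hk) andbF.
rewrite big_nat_cond (eq_bigr (fun _ => 1)).
  by rewrite -big_nat_cond sum_nat_const_nat muln1.
by move=> k /andP[/andP[Hk1 Hk2] _]; rewrite Hk1 Hk2.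
Qed.

Section S.
Variable N : nat.

Definition rowx (s : spin_config N) (i : 'I_N) : nat -> bool :=
  fun k => oapp (fun o : 'I_N => s (i, o)) true (insub k).
Definition colx (s : spin_config N) (j : 'I_N) : nat -> bool :=
  fun k => oapp (fun o : 'I_N => s (o, j)) true (insub k).

Lemma rowxE s i (o : 'I_N) : rowx s i o = s (i, o).
Proof. by rewrite /rowx valK. Qed.
Lemma colxE s j (o : 'I_N) : colx s j o = s (o, j).
Proof. by rewrite /colx valK. Qed.

Lemma even_E1 s : even_constraint s ->
  (forall i, E1 (rowx s i) N) /\ (forall j, E1 (colx s j) N).
Proof.
move=> /andP[/forallP Hr /forallP Hc]; split.
- move=> i j1 j2 H12 H2 Hm1 Hm2 Hb.
  have H1 := ltn_trans H12 H2.
  have := implyP (forallP (forallP (Hr i) (Ordinal H1)) (Ordinal H2)).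
  rewrite card_between //=.
  + move=> -> //; move: Hm1 Hm2; rewrite -[j1]/(nat_of_ord (Ordinal H1)) -[j2]/(nat_of_ord (Ordinal H2)) !rowxE => -> ->.
    rewrite H12 /=; apply/forallP => k; apply/implyP => /andP[Hk1 Hk2].
    by rewrite -rowxE; apply: Hb.
  + exact: ltnW.
  + by move=> k Hk1 Hk2; rewrite -rowxE; apply: Hb.
- move=> j i1 i2 H12 H2 Hm1 Hm2 Hb.
  have H1 := ltn_trans H12 H2.
  have := implyP (forallP (forallP (Hc j) (Ordinal H1)) (Ordinal H2)).
  rewrite card_between //=.
  + move=> -> //; move: Hm1 Hm2; rewrite -[i1]/(nat_of_ord (Ordinal H1)) -[i2]/(nat_of_ord (Ordinal H2)) !colxE => -> ->.
    rewrite H12 /=; apply/forallP => k; apply/implyP => /andP[Hk1 Hk2].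
    by rewrite -colxE; apply: Hb.
  + exact: ltnW.
  + by move=> k Hk1 Hk2; rewrite -colxE; apply: Hb.
Qed.

Lemma E1_even s : (forall i, E1 (rowx s i) N) -> (forall j, E1 (colx s j) N) ->
  even_constraint s.
Proof.
move=> Hr Hc; apply/andP; split.
- apply/forallP => i; apply/forallP => j1; apply/forallP => j2; apply/implyP.
  case/andP=> /andP[/andP[H12 Hm1] Hm2] /forallP Hb.
  have Hb' : forall k : 'I_N, j1 < k -> k < j2 -> s (i, k).
    by move=> k H1 H2; have := implyP (Hb k); rewrite H1 H2; apply.
  rewrite card_between; [|exact: ltnW (ltn_ord _)|exact: Hb'].
  apply: (Hr i j1 j2 H12 (ltn_ord j2)); rewrite ?rowxE //.
  move=> k H1 H2; have Hk : k < N by apply: ltn_trans H2 _.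
  by rewrite -[k]/(nat_of_ord (Ordinal Hk)) rowxE; apply: Hb'.
- apply/forallP => j; apply/forallP => i1; apply/forallP => i2; apply/implyP.
  case/andP=> /andP[/andP[H12 Hm1] Hm2] /forallP Hb.
  have Hb' : forall k : 'I_N, i1 < k -> k < i2 -> s (k, j).
    by move=> k H1 H2; have := implyP (Hb k); rewrite H1 H2; apply.
  rewrite card_between; [|exact: ltnW (ltn_ord _)|exact: Hb'].
  apply: (Hc j i1 i2 H12 (ltn_ord i2)); rewrite ?colxE //.
  move=> k H1 H2; have Hk : k < N by apply: ltn_trans H2 _.
  by rewrite -[k]/(nat_of_ord (Ordinal Hk)) colxE; apply: Hb'.
Qed.

End S.

Definition okv (p w e n s : bool) :=
  (if p then w != e else ~~ w && ~~ e) && (if p then n != s else ~~ n && ~~ s).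

Lemma okv_ok w e n s : pi_vertex_ok w e n s = okv [|| w, e, n | s] w e n s.
Proof. by case: w; case: e; case: n; case: s. Qed.

Lemma okv_p p w e n s : okv p w e n s -> p = [|| w, e, n | s].
Proof. by case: p; case: w; case: e; case: n; case: s. Qed.

Section S.
Variable N : nat.

Definition rowb (L : pi_labelling N) (i : 'I_N) : nat -> bool :=
  fun k => oapp (fun o : 'I_N.+1 => L.1 (i, o)) false (insub k).
Definition colb (L : pi_labelling N) (j : 'I_N) : nat -> bool :=
  fun k => oapp (fun o : 'I_N.+1 => L.2 (o, j)) false (insub k).

Lemma rowbE L i (o : 'I_N.+1) : rowb L i o = L.1 (i, o).
Proof. by rewrite /rowb valK. Qed.
Lemma colbE L j (o : 'I_N.+1) : colb L j o = L.2 (o, j).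
Proof. by rewrite /colb valK. Qed.

Lemma rowb_w L i (j : 'I_N) : rowb L i j = L.1 (i, widen_ord (leqnSn N) j).
Proof. by rewrite -rowbE. Qed.
Lemma rowb_l L i (j : 'I_N) : rowb L i j.+1 = L.1 (i, lift ord0 j).
Proof. by rewrite -rowbE. Qed.
Lemma colb_w L j (i : 'I_N) : colb L j i = L.2 (widen_ord (leqnSn N) i, j).
Proof. by rewrite -colbE. Qed.
Lemma colb_l L j (i : 'I_N) : colb L j i.+1 = L.2 (lift ord0 i, j).
Proof. by rewrite -colbE. Qed.

Definition spinL (L : pi_labelling N) : spin_config N :=
  [ffun v : 'I_N * 'I_N =>
     [|| L.1 (v.1, widen_ord (leqnSn N) v.2), L.1 (v.1, lift ord0 v.2),
         L.2 (widen_ord (leqnSn N) v.1, v.2) | L.2 (lift ord0 v.1, v.2)]].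

Lemma valid_V1 L : pi_valid L ->
  (forall i, V1 (rowx (spinL L) i) (rowb L i) N) /\
  (forall j, V1 (colx (spinL L) j) (colb L j) N).
Proof.
move=> /forallP HV; split.
- move=> i j Hj; rewrite -[j]/(nat_of_ord (Ordinal Hj)).
  rewrite rowxE rowb_w rowb_l ffunE /=.
  have := forallP (HV i) (Ordinal Hj); rewrite okv_ok /okv.
  by case/andP.
- move=> j i Hi; rewrite -[i]/(nat_of_ord (Ordinal Hi)).
  rewrite colxE colb_w colb_l ffunE /=.
  have := forallP (HV (Ordinal Hi)) j; rewrite okv_ok /okv.
  by case/andP.
Qed.

Definition bL (s : spin_config N) : pi_labelling N :=
  ([ffun v : 'I_N * 'I_N.+1 => bfun (rowx s v.1) (cfun (rowx s v.1) N) v.2],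
   [ffun v : 'I_N.+1 * 'I_N => bfun (colx s v.2) (cfun (colx s v.2) N) v.1]).

Lemma bL_okv s : even_constraint s -> forall i j,
  okv (s (i, j)) ((bL s).1 (i, widen_ord (leqnSn N) j)) ((bL s).1 (i, lift ord0 j))
      ((bL s).2 (widen_ord (leqnSn N) i, j)) ((bL s).2 (lift ord0 i, j)).
Proof.
move=> /even_E1 [Hr Hc] i j; rewrite /bL /= !ffunE /=.
have V1r := E1_V1c (Hr i) (ltn_ord j).
have V1c := E1_V1c (Hc j) (ltn_ord i).
rewrite rowxE in V1r; rewrite colxE in V1c.
rewrite /okv; case: (s (i, j)) V1r V1c => ->; exact.
Qed.

Lemma bL_valid s : even_constraint s -> pi_valid (bL s).
Proof.
move=> He; apply/forallP => i; apply/forallP => j.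
have H := bL_okv He i j; by rewrite okv_ok -(okv_p H).
Qed.

Lemma bL_spin s : even_constraint s -> spinL (bL s) = s.
Proof.
move=> He; apply/ffunP => [[i j]]; rewrite ffunE /=.
by rewrite -(okv_p (bL_okv He i j)).
Qed.

Lemma spin_even L : pi_valid L -> even_constraint (spinL L).
Proof.
move=> /valid_V1 [Hr Hc]; apply: E1_even => i.
- exact: V1_E1 (Hr i).
- exact: V1_E1 (Hc i).
Qed.

Definition gL (L : pi_labelling N) :=
  (spinL L, [ffun i : 'I_N => L.1 (i, ord0)], [ffun j : 'I_N => L.2 (ord0, j)]).

Lemma gL_inj : {in [set L | pi_valid L] &, injective gL}.
Proof.
move=> [h1 v1] [h2 v2]; rewrite !inE => HV1 HV2 [Hs Hb1 Hb2].
have [R1 C1] := valid_V1 HV1; have [R2 C2] := valid_V1 HV2.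
congr pair; apply/ffunP => [[i p]].
- have E1 := rowbE (h1, v1) i p; have E2 := rowbE (h2, v2) i p.
  simpl in E1, E2; rewrite -E1 -E2; apply: (V1_uniq (R1 i)); first by rewrite Hs; apply: R2.
    have := congr1 (fun f : {ffun 'I_N -> bool} => f i) Hb1; rewrite /= !ffunE.
    by rewrite (rowbE (h1, v1) i ord0) (rowbE (h2, v2) i ord0).
  by rewrite -ltnS.
- have E1 := colbE (h1, v1) p i; have E2 := colbE (h2, v2) p i.
  simpl in E1, E2; rewrite -E1 -E2; apply: (V1_uniq (C1 p)); first by rewrite Hs; apply: C2.
    have := congr1 (fun f : {ffun 'I_N -> bool} => f p) Hb2; rewrite /= !ffunE.
    by rewrite (colbE (h1, v1) p ord0) (colbE (h2, v2) p ord0).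
  by rewrite -ltnS.
Qed.

End S.

Lemma low N : (Z_even N <= Z_pi N)%N.
Proof.
rewrite /Z_even /Z_pi.
have inj : {in [set s : spin_config N | even_constraint s] &, injective (@bL N)}.
  move=> x y; rewrite !inE => Hx Hy E.
  by rewrite -(bL_spin Hx) -(bL_spin Hy) E.
rewrite -(card_in_imset inj); apply: subset_leq_card.
apply/subsetP => L /imsetP [s Hs ->]; rewrite inE; apply: bL_valid.
by move: Hs; rewrite inE.
Qed.

Lemma up N : (Z_pi N <= 4 ^ N * Z_even N)%N.
Proof.
rewrite /Z_even /Z_pi -(card_in_imset (@gL_inj N)).
apply: (@leq_trans #|setX (setX [set s : spin_config N | even_constraint s]
                     [set: {ffun 'I_N -> bool}]) [set: {ffun 'I_N -> bool}]|).
  apply: subset_leq_card; apply/subsetP => x /imsetP [L HL ->].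
  rewrite !inE /gL /=; rewrite !andbT; apply: spin_even; by move: HL; rewrite inE.
rewrite !cardsX !cardsT card_ffun card_bool card_ord.
by rewrite [X in _ <= X]mulnC -[4]/(2 * 2) expnMn mulnA.
Qed.

Lemma pos N : (0 < Z_even N)%N.
Proof.
rewrite /Z_even; apply/card_gt0P; exists [ffun _ => true]; rewrite inE.
apply/andP; split; apply/forallP => i; apply/forallP => j1; apply/forallP => j2;
  by rewrite !ffunE /= andbF.
Qed.

Local Open Scope R_scope.

Lemma INR_mul m n : INR (m * n)%N = (INR m * INR n)%R.
Proof. exact: mult_INR. Qed.

Lemma INR_exp m n : INR (m ^ n)%N = (INR m ^ n)%R.
Proof. elim: n => [|n IH] //=. by rewrite expnS INR_mul IH. Qed.

Lemma INR_le m n : (m <= n)%N -> (INR m <= INR n)%R.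
Proof. by move/leP; apply: le_INR. Qed.

Lemma INR_pos m : (0 < m)%N -> (0 < INR m)%R.
Proof. by move/ltP; apply: lt_0_INR. Qed.

Lemma c_ge0 N : (0 <= / INR (N * N))%R.
Proof.
case: N => [|n]; first by rewrite /= Rinv_0; lra.
apply/Rlt_le/Rinv_0_lt_compat/INR_pos; by rewrite muln_gt0.
Qed.

Lemma up_real N :
  (growth_seq Z_pi N <= exp (/ INR N * ln (INR 4)) * growth_seq Z_even N)%R.
Proof.
rewrite /growth_seq.
have Hp := INR_pos (pos N).
have H4 : (0 < INR (4 ^ N))%R by apply: INR_pos; rewrite expn_gt0.
apply: Rle_trans (Rle_Rpower_l _ _ _ (c_ge0 N) _) _.
  split; last by apply: INR_le; apply: up.
  by apply: INR_pos; apply: leq_trans (pos N) (low N).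
rewrite INR_mul -Rpower_mult_distr //; apply: Rmult_le_compat_r.
  rewrite /Rpower; left; apply: exp_pos.
rewrite /Rpower INR_exp ln_pow; last exact: (@INR_pos 4 isT).
case: N {Hp H4} => [|n]; first by rewrite !Rinv_0 !Rmult_0_l; right.
right; f_equal; rewrite INR_mul Rinv_mult; field.
exact: not_0_INR.
Qed.

Theorem mainTheorem2 (kappa_even kappa_pi : R) :
  is_lim_seq (growth_seq Z_even) kappa_even ->
  is_lim_seq (growth_seq Z_pi) kappa_pi ->
  kappa_even = kappa_pi.
Proof.
move=> He Hp.
have L1 : Rbar_le kappa_even kappa_pi.
  apply: is_lim_seq_le He Hp => N; rewrite /growth_seq.
  apply: Rle_Rpower_l; first exact: c_ge0.
  split; [exact: (INR_pos (pos N)) | exact: INR_le (low N)].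
have Hu : is_lim_seq (fun N => exp (/ INR N * ln (INR 4))) (Rbar.Finite (exp 0)).

  apply: (is_lim_seq_continuous exp (fun N => / INR N * ln (INR 4))%R 0).
    exact: derivable_continuous_pt (derivable_pt_exp 0).
  have -> : Rbar.Finite 0 = Rbar_mult (Rbar_inv p_infty) (ln (INR 4)) by rewrite /= Rmult_0_l.
  apply: is_lim_seq_scal_r; apply: is_lim_seq_inv; first exact: is_lim_seq_INR.
  by [].
have L2 : Rbar_le kappa_pi (exp 0 * kappa_even)%R.
  apply: is_lim_seq_le Hp (is_lim_seq_mult' _ _ _ _ Hu He) => N.
  exact: up_real.
rewrite exp_0 in L2; simpl in L1, L2; lra.
Qed.
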